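(* Let $\mathcal{R}=(\mathcal{W},\mathcal{R}_1,\mathcal{R}_2)$ with $\mathcal{W}=\{1,\dots,m\}$, let $\mathcal{S}$, $L$, $K_1,\dots,K_4$ be constructed from $\mathcal{R}$ as below, and let $\mathcal{T}$ be a solution to the $\mathcal{S}$-cyclic triomino problem. Fix $s\in\mathbb{Z}^2$. If $q(s,i)$ holds for some $1\le i\le 4$, then $q(s,i)$ holds for every $1\le i\le 4$.
   Context: A domino set is $\mathcal{R}=(\mathcal{W},\mathcal{R}_1,\mathcal{R}_2)$ with $\mathcal{W}$ non-empty finite and $\mathcal{R}_1,\mathcal{R}_2\subset\mathcal{W}^2$; here $\mathcal{W}=\{1,\dots,m\}$. Let $u_1=(1,0),u_2=(0,1),u_3=(-1,0),u_4=(0,-1)$, indices mod 4. Fix $n\ge 2m+1$ and regard integers as elements of $\mathbb{Z}_n$. Let $L=\{(w,0,0): w\in\mathcal{W}\}$, $K_1=L\cup\{(0,b,a):(a,b)\in\mathcal{R}_1\}$, $K_2=L\cup\{(0,a,b):(a,b)\in\mathcal{R}_2\}$, $K_3=L\cup\{(0,a,b):(a,b)\in\mathcal{R}_1\}$, $K_4=L\cup\{(0,b,a):(a,b)\in\mathcal{R}_2\}$, with $K_{i+4}=K_i$. Let $\mathcal{V}=\mathbb{Z}_n$, $\mathcal{S}_i=\{(a+k,b+k,c+k):(a,b,c)\in K_i, k\in\mathcal{V}\}$, $\mathcal{S}_{i+4}=\mathcal{S}_i$, and $\mathcal{S}=(\mathcal{V},\mathcal{S}_1,\dots,\mathcal{S}_4)$.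 A solution to the $\mathcal{S}$-cyclic triomino problem is a function $\mathcal{T}:\mathbb{Z}^2\to\mathcal{V}$ with $(\mathcal{T}(s),\mathcal{T}(s+u_i),\mathcal{T}(s+u_{i+1}))\in\mathcal{S}_i$ for all $s$ and $1\le i\le 4$. For $s\in\mathbb{Z}^2$, $i\in\mathbb{Z}$, $p(s,i)$ is the statement $(\mathcal{T}(s),\mathcal{T}(s+u_i),\mathcal{T}(s+u_{i+1}))\in L$ and $q(s,i)$ is the statement $(\mathcal{T}(s),\mathcal{T}(s+u_i),\mathcal{T}(s+u_{i+1}))\in K_i\setminus L$. *)

(* Defs.v *)
From mathcomp Require Import all_boot all_order all_algebra.
Set Implicit Arguments. Unset Strict Implicit. Unset Printing Implicit Defensive.
Import GRing.Theory Num.Theory.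
Local Open Scope ring_scope.

(* Vertices V = Z_n, represented by 'Z_n (the hypothesis n >= 2m+1, m >= 1
   ensures n >= 3, so 'Z_n is genuinely Z/nZ). *)
Definition triple (n : nat) := ('Z_n * 'Z_n * 'Z_n)%type.

Definition u (i : nat) : int * int :=
  match (i %% 4)%N with
  | 1 => (1, 0)
  | 2 => (0, 1)
  | 3 => (-1, 0)
  | _ => (0, -1)
  end.

Definition addp (s t : int * int) : int * int := (s.1 + t.1, s.2 + t.2).

Definition Lset (n m : nat) (t : triple n) : Prop :=
  exists w : nat, (1 <= w <= m)%N /\ t = (w%:R, 0, 0).

Definition Kset (n m : nat) (R1 R2 : nat -> nat -> Prop) (i : nat)
    (t : triple n) : Prop :=
  Lset m t \/
  match (i %% 4)%N with
  | 1 => exists a b, R1 a b /\ t = (0, b%:R, a%:R)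
  | 2 => exists a b, R2 a b /\ t = (0, a%:R, b%:R)
  | 3 => exists a b, R1 a b /\ t = (0, a%:R, b%:R)
  | _ => exists a b, R2 a b /\ t = (0, b%:R, a%:R)
  end.

Definition Sset (n m : nat) (R1 R2 : nat -> nat -> Prop) (i : nat)
    (t : triple n) : Prop :=
  exists (a b c k : 'Z_n), Kset m R1 R2 i (a, b, c) /\
    t = (a + k, b + k, c + k).

Definition trip (n : nat) (T : int * int -> 'Z_n) (s : int * int) (i : nat)
    : triple n :=
  (T s, T (addp s (u i)), T (addp s (u i.+1))).

Definition is_solution (n m : nat) (R1 R2 : nat -> nat -> Prop)
    (T : int * int -> 'Z_n) : Prop :=
  forall (s : int * int) (i : nat), (1 <= i <= 4)%N ->
    Sset m R1 R2 i (trip T s i).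

Definition q (n m : nat) (R1 R2 : nat -> nat -> Prop)
    (T : int * int -> 'Z_n) (s : int * int) (i : nat) : Prop :=
  Kset m R1 R2 i (trip T s i) /\ ~ Lset m (trip T s i).

(* Main.v *)
Require Import Defs.
From mathcomp Require Import all_boot all_order all_algebra.
From mathcomp Require Import zify.
Import GRing.Theory.
Local Open Scope ring_scope.
Set Implicit Arguments. Unset Strict Implicit.

Lemma Zn_nat_neq0 (n k : nat) : (1 < n)%N -> (0 < k < n)%N -> (k%:R : 'Z_n) != 0.
Proof.
move=> hn hk; have := val_Zp_nat hn k. rewrite modn_small; last lia.
move=> h; apply/eqP => E; rewrite E in h. simpl in h. lia.
Qed.

Definition good (n m : nat) (v : 'Z_n) := exists w, (1 <= w <= m)%N /\ v = w%:R.

Lemma Kset_eq n m R1 R2 j j' (t : triple n) : (j %% 4 = j' %% 4)%N ->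
  Kset m R1 R2 j t = Kset m R1 R2 j' t.
Proof. by move=> E; rewrite /Kset E. Qed.

Lemma Sset_eq n m R1 R2 j j' (t : triple n) : (j %% 4 = j' %% 4)%N ->
  Sset m R1 R2 j t = Sset m R1 R2 j' t.
Proof. by move=> E; rewrite /Sset /Kset E.
Qed.

Lemma u_eq j j' : (j %% 4 = j' %% 4)%N -> u j = u j'.
Proof. by move=> E; rewrite /u E. Qed.

Lemma trip_eq n (T : int * int -> 'Z_n) s j j' : (j %% 4 = j' %% 4)%N ->
  trip T s j = trip T s j'.
Proof.
move=> E; rewrite /trip (u_eq E); congr (_, _, T (addp s _)).
apply: u_eq; lia.
Qed.

Lemma q_eq n m R1 R2 (T : int * int -> 'Z_n) s j j' : (j %% 4 = j' %% 4)%N ->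
  q m R1 R2 T s j -> q m R1 R2 T s j'.
Proof. by move=> E; rewrite /q (trip_eq T s E) /Kset E. Qed.

Section S.
Variables (m n : nat) (R1 R2 : nat -> nat -> Prop)
  (hm : (1 <= m)%N) (hn : (2 * m + 1 <= n)%N)
  (hR1 : forall a b, R1 a b -> (1 <= a <= m)%N /\ (1 <= b <= m)%N)
  (hR2 : forall a b, R2 a b -> (1 <= a <= m)%N /\ (1 <= b <= m)%N).

Lemma match_char j (t : triple n) :
  match (j %% 4)%N with
  | 1 => exists a b, R1 a b /\ t = (0, b%:R, a%:R)
  | 2 => exists a b, R2 a b /\ t = (0, a%:R, b%:R)
  | 3 => exists a b, R1 a b /\ t = (0, a%:R, b%:R)
  | _ => exists a b, R2 a b /\ t = (0, b%:R, a%:R)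
  end -> t.1.1 = 0 /\ good m t.1.2 /\ good m t.2.
Proof.
case: (j %% 4)%N => [|[|[|[|?]]]] [a [b [Rab ->]]] /=;
  (have [[ha hb]|[ha hb]] : ((1 <= a <= m)%N /\ (1 <= b <= m)%N) \/
      ((1 <= a <= m)%N /\ (1 <= b <= m)%N) by first [left; exact: hR1 | left; exact: hR2]);
  (split; [by [] | split; [eexists; split; [|reflexivity]; done |
     eexists; split; [|reflexivity]; done]]).
Qed.

Lemma L_neq (t : triple n) : t.1.1 = 0 -> ~ Lset m t.
Proof.
move=> h [w [hw E]]; rewrite E /= in h.
by move: (@Zn_nat_neq0 n w ltac:(lia) ltac:(lia)); rewrite h eqxx.
Qed.

Lemma K_nonL_char j (t : triple n) : Kset m R1 R2 j t -> ~ Lset m t ->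
  t.1.1 = 0 /\ good m t.1.2 /\ good m t.2.
Proof. by case=> [//|H] _; exact: match_char H. Qed.

Lemma char_K j (t : triple n) : Sset m R1 R2 j t -> t.1.1 = 0 -> good m t.1.2 ->
  Kset m R1 R2 j t /\ ~ Lset m t.
Proof.
move=> [a [b [c [k [HK ->]]]]] /= h0 [w' [hw' E]].
case: (HK) => [[w [hw Ew]] | HK'].
  case: Ew => Ea Eb Ec; subst a b c; exfalso; rewrite add0r in E; rewrite E -natrD in h0.
  by move: (@Zn_nat_neq0 n (w + w') ltac:(lia) ltac:(lia)); rewrite h0 eqxx.
have [ha _] := match_char HK'; rewrite /= in ha.
rewrite ha add0r in h0; rewrite h0 !addr0 ha.
split; first by rewrite -ha.
exact: L_neq.
Qed.

End S.

Theorem lemma3p3 (m n : nat) (R1 R2 : nat -> nat -> Prop)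
  (hm : (1 <= m)%N) (hn : (2 * m + 1 <= n)%N)
  (hR1 : forall a b, R1 a b -> (1 <= a <= m)%N /\ (1 <= b <= m)%N)
  (hR2 : forall a b, R2 a b -> (1 <= a <= m)%N /\ (1 <= b <= m)%N)
  (T : int * int -> 'Z_n)
  (hT : is_solution m R1 R2 T)
  (s : int * int) :
  (exists i, (1 <= i <= 4)%N /\ q m R1 R2 T s i) ->
  forall i, (1 <= i <= 4)%N -> q m R1 R2 T s i.
Proof.
move=> [i0 [_ [HK HL]]] i hi.
have hT' : forall j, Sset m R1 R2 j (trip T s j).
  move=> j; have E : (j %% 4 = ((j + 3) %% 4 + 1) %% 4)%N by lia.
  rewrite (trip_eq T s E); move: (hT s ((j + 3) %% 4 + 1)%N ltac:(lia)).
  by rewrite /Sset /Kset -E.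
have [h0 [g1 g2]] := K_nonL_char hR1 hR2 HK HL.
have key : forall k, q m R1 R2 T s (i0 + k) /\ good m (trip T s (i0 + k)).2.
  elim=> [|k [[HK' HL'] IH]].
    rewrite addn0; split; [split; [exact: HK | exact: HL] | exact: g2].
  have h0' : (trip T s (i0 + k.+1)%N).1.1 = 0 := h0.
  have g' : good m (trip T s (i0 + k.+1)%N).1.2 by rewrite addnS; exact: IH.
  have [Hk Hl] := char_K hm hn hR1 hR2 (hT' (i0 + k.+1)%N) h0' g'.
  split; first by split.
  exact: (K_nonL_char hR1 hR2 Hk Hl).2.2.
have E : ((i0 + (4 - i0 %% 4 + i)) %% 4 = i %% 4)%N by lia.
exact: (q_eq E (key _).1).
Qed.
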